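(* Let $\phi:\mathbb{N}_0\to\mathbb{N}_0$ satisfy $\phi(0)=0$ and $\phi(x)\neq x$ for all $x\in\mathbb{N}$. If $\phi$ has a cycle (i.e. there exist $m\ge2$ and $x\in\mathbb{N}$ with $\phi^m(x)=x$), then there exists an integer $N\ge2$ such that $\det\widehat{M}_n(\phi)=0$ for all $n\ge N$.
   Context: $\mathbb{N}=\{1,2,\dots\}$, $\mathbb{N}_0=\mathbb{N}\cup\{0\}$, $D_n=\{1,\dots,n\}$, $D_{n,0}=D_n\cup\{0\}$. The local function $\phi_n:D_{n,0}\to D_{n,0}$ is $\phi_n(x)=\phi(x)$ if $x\in D_n$ and $\phi(x)\in D_n$, and $\phi_n(x)=0$ otherwise. For $1\le i\le n$, $\mathbf{e}_i$ is the $i$-th unit vector in $\mathbb{Z}^n$ and $\mathbf{e}_0$ is the zero vector. $M_n(\phi)$ is the $n\times n$ matrix whose $j$-th column is $\mathbf{e}_{\phi_n(j)}$ ($1\le j\le n$), and $\widehat{M}_n(\phi)=I-M_n(\phi)$. *)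

(* Defs.v *)
From mathcomp Require Import all_boot all_order all_algebra.
Set Implicit Arguments. Unset Strict Implicit. Unset Printing Implicit Defensive.
Import GRing.Theory.
Local Open Scope ring_scope.

Definition phi_loc (phi : nat -> nat) (n x : nat) : nat :=
  if (1 <= x <= n)%N && (1 <= phi x <= n)%N then phi x else 0%N.

(* unit vector e_k in Z^n (as a column), e_0 = 0; coordinate i : 'I_n is i+1 *)
Definition unit_vec (n k : nat) : 'cV[int]_n :=
  \col_(i < n) (if k == i.+1 then 1 else 0).

(* M_n(phi): j-th column (j : 'I_n standing for j+1) is e_{phi_n(j+1)} *)
Definition Mphi (phi : nat -> nat) (n : nat) : 'M[int]_n :=
  \matrix_(i < n, j < n) unit_vec n (phi_loc phi n j.+1) i 0.

Definition Mhat (phi : nat -> nat) (n : nat) : 'M[int]_n := 1%:M - Mphi phi n.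

(* Main.v *)
Require Import Defs.
From mathcomp Require Import all_boot all_order all_algebra.
From Stdlib Require Import ClassicalEpsilon.
Import GRing.Theory.
Local Open Scope ring_scope.

Lemma iter_mul_period (f : nat -> nat) m x t :
  iter m f x = x -> iter (t * m) f x = x.
Proof.
move=> H; elim: t => [|t IH] //=.
by rewrite mulSn iterD IH H.
Qed.

Lemma iter_mod (f : nat -> nat) m x k : (0 < m)%N ->
  iter m f x = x -> iter k f x = iter (k %% m) f x.
Proof.
move=> m0 H; rewrite {1}(divn_eq k m) addnC iterD.
by rewrite iter_mul_period.
Qed.

Theorem corollary1p4 (phi : nat -> nat) :
  phi 0%N = 0%N ->
  (forall x : nat, (1 <= x)%N -> phi x <> x) ->
  (exists m x : nat, [/\ (2 <= m)%N, (1 <= x)%N & iter m phi x = x]) ->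
  exists N : nat, (2 <= N)%N /\
    forall n : nat, (N <= n)%N -> \det (Mhat phi n) = 0.
Proof.
move=> phi0 _ [m [x [m2 x1 Hm]]].
have m0 : (0 < m)%N by apply: leq_trans m2.
pose N0 := (\max_(k < m) iter k phi x)%N.
have orb_le : forall k, (iter k phi x <= N0)%N.
  move=> k; rewrite (iter_mod _ _ _ _ m0 Hm).
  exact: (@leq_bigmax _ (fun i : 'I_m => iter i phi x) (Ordinal (ltn_pmod k m0))).
have orb_ge : forall k, (1 <= iter k phi x)%N.
  move=> k; rewrite lt0n; apply/eqP => H0.
  have : iter (k * m) phi x = x by apply: iter_mul_period.
  have -> : (k * m = (k * m - k) + k)%N.
    by rewrite subnK // leq_pmulr.
  rewrite iterD H0 iter_fix // => Hx.
  by rewrite -Hx in x1.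
exists (maxn 2 N0); split; first exact: leq_maxl.
move=> n Hn.
have N0n : (N0 <= n)%N by apply: leq_trans Hn; exact: leq_maxr.
pose f := phi_loc phi n.
pose Reach y := exists k k', iter k f y = iter k' phi x.
pose W y : int := if excluded_middle_informative (Reach y) then 1 else 0.
have f0 : forall k, iter k f 0%N = 0%N.
  by move=> k; apply: iter_fix; rewrite /f /phi_loc.
have W0 : W 0%N = 0.
  rewrite /W; case: excluded_middle_informative => // [[k [k' H]]].
  exfalso; have := orb_ge k'; rewrite -H f0.
  by [].
have forb : forall k', f (iter k' phi x) = iter k'.+1 phi x.
  move=> k'; rewrite /f /phi_loc orb_ge (leq_trans (orb_le _) N0n) /=.
  have := orb_ge k'.+1; have := orb_le k'.+1 => /= a b.
  by rewrite b (leq_trans a N0n).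
have Wf : forall y, W (f y) = W y.
  move=> y; rewrite /W.
  case: excluded_middle_informative => [[k [k' H]]|N1];
    case: excluded_middle_informative => //.
  - move=> N2; by exfalso; apply: N2; exists k.+1, k'; rewrite iterSr.
  - move=> [k [k' H]]; exfalso; apply: N1; case: k H => [|k] H.
      by exists 0%N, k'.+1; rewrite /= in H *; rewrite H forb.
    by exists k, k'; rewrite -iterSr.
pose w : 'rV[int]_n := \row_(i < n) W i.+1.
have x_n : (x.-1 < n)%N.
  rewrite prednK //; apply: leq_trans N0n.
  exact: (orb_le 0%N).
have wx : w 0 (Ordinal x_n) = 1.
  rewrite mxE /= prednK // /W; case: excluded_middle_informative => // H.
  by exfalso; apply: H; exists 0%N, 0%N.
have wM : w *m Mphi phi n = w.
  apply/rowP => j; rewrite !mxE.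
  transitivity (W (f j.+1)); last by rewrite Wf.
  under eq_bigr => i _ do rewrite !mxE.
  case Hp: (f j.+1) => [|p].
    rewrite W0 big1 // => i _.
    by rewrite /f in Hp; rewrite Hp /= mulr0.
  have pn : (p < n)%N.
    move: Hp; rewrite /f /phi_loc; case: ifP => // /andP [_ /andP [_ H]] E.
    by rewrite E in H.
  rewrite (bigD1 (Ordinal pn)) //= big1 ?addr0.
    by rewrite /f in Hp; rewrite Hp eqxx mulr1.
  move=> i Hi; rewrite /f in Hp; rewrite Hp eqSS.
  case: eqP => [E|]; last by rewrite mulr0.
  by exfalso; move/eqP: Hi; apply; apply: val_inj; rewrite /= E.
have wMh : w *m Mhat phi n = 0.
  by rewrite /Mhat mulmxBr mulmx1 wM subrr.
have := congr1 (fun A => A *m \adj (Mhat phi n)) wMh.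
rewrite /= -mulmxA mul_mx_adj mul0mx mul_mx_scalar => /rowP /(_ (Ordinal x_n)).
rewrite !mxE => E; move: wx; rewrite mxE => wx.
by rewrite wx mulr1 in E.
Qed.
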